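(* Let $\mathcal T\in\{\mathcal T_{CDV},\mathcal T_{BCD}\}$. If $B\vdash^{\mathcal T}_{=_{\beta\eta}}\Delta_1:\sigma$ and $\Delta_1\to_\eta\Delta_2$, then $B\vdash^{\mathcal T}_{=_{\beta\eta}}\Delta_2:\sigma$.
   Context: Type atoms: a set $\mathbb{A}$ of symbols; $\omega$ denotes a distinguished atom (the universal type). $\mathbb{A}_\infty=\{\mathtt a_i\mid i\in\mathbb N\}$ with each $\mathtt a_i\neq\omega$, and $\mathbb{A}^\omega_\infty=\mathbb{A}_\infty\cup\{\omega\}$. Intersection types over $\mathbb A$: $\sigma::= a\mid\sigma\to\sigma\mid\sigma\cap\sigma$ ($a\in\mathbb A$). An intersection type theory $\mathcal T$ over $\mathbb A$ is a set of inequalities $\sigma\le\tau$ (written $\sigma\le_{\mathcal T}\tau$) closed under (refl) $\sigma\le\sigma$; (incl) $\sigma\cap\tau\le\sigma$ and $\sigma\cap\tau\le\tau$; (glb) $\rho\le\sigma$ and $\rho\le\tau$ imply $\rho\le\sigma\cap\tau$; (trans) $\sigma\le\tau$ and $\tau\le\rho$ imply $\sigma\le\rho$. Additional axioms/rules: $(\omega_{top})$ $\sigma\le\omega$; $(\omega_{\to})$ $\omega\le\sigma\to\omega$; $(\to\cap)$ $(\sigma\to\tau)\cap(\sigma\to\rho)\le\sigma\to(\tau\cap\rho)$; $(\to)$ $\sigma_2\le\sigma_1$ and $\tau_1\le\tau_2$ imply $\sigma_1\to\tau_1\le\sigma_2\to\tau_2$. $\mathcal T_{CDV}$ = smallest type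 theory over $\mathbb A_\infty$ closed under $(\to)$ and $(\to\cap)$; $\mathcal T_{BCD}$ = smallest over $\mathbb A^\omega_\infty$ closed under $(\to),(\to\cap),(\omega_{top}),(\omega_\to)$. $\Delta$-terms: $\Delta::=u_\Delta\mid x\mid\lambda x{:}\sigma.\Delta\mid\Delta\,\Delta\mid\langle\Delta,\Delta\rangle\mid pr_1\Delta\mid pr_2\Delta\mid\Delta^\sigma$, where for every (not necessarily typable) $\Delta$-term $\Delta$ there is a constant $u_\Delta$. The essence $\|\Delta\|$ is the pure $\lambda$-term defined by $\|x\|=x$, $\|u_\Delta\|=\|\Delta\|$, $\|\Delta^\sigma\|=\|\Delta\|$, $\|\lambda x{:}\sigma.\Delta\|=\lambda x.\|\Delta\|$, $\|\Delta_1\Delta_2\|=\|\Delta_1\|\,\|\Delta_2\|$, $\|\langle\Delta_1,\Delta_2\rangle\|=\|\Delta_1\|$, $\|pr_i\Delta\|=\|\Delta\|$. A basis $B$ is a finite set of declarations $x{:}\sigma$ with distinct variables. The typed system $\Delta^{\mathcal T}_{=_{\beta\eta}}$ derives $B\vdash^{\mathcal T}_{=_{\beta\eta}}\Delta:\sigma$ by: (top) $B\vdash u_\Delta:\omega$ if $\omega\in\mathbb A$; (ax) $B\vdash x:\sigma$ if $x{:}\sigma\in B$; ($\to$I) from $B,x{:}\sigma\vdash\Delta:\tau$ infer $B\vdash\lambda x{:}\sigma.\Delta:\sigma\to\tau$; ($\to$E) from $B\vdash\Delta_1:\sigma\to\tau$ and $B\vdash\Delta_2:\sigma$ infer $B\vdash\Delta_1\Delta_2:\tau$;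 ($\cap$I) from $B\vdash\Delta_1:\sigma$, $B\vdash\Delta_2:\tau$ and $\|\Delta_1\|=_{\beta\eta}\|\Delta_2\|$ infer $B\vdash\langle\Delta_1,\Delta_2\rangle:\sigma\cap\tau$; ($\cap$E$_1$) from $B\vdash\Delta:\sigma\cap\tau$ infer $B\vdash pr_1\Delta:\sigma$; ($\cap$E$_2$) from $B\vdash\Delta:\sigma\cap\tau$ infer $B\vdash pr_2\Delta:\tau$; ($\le_{\mathcal T}$) from $B\vdash\Delta:\sigma$ and $\sigma\le_{\mathcal T}\tau$ infer $B\vdash\Delta^\tau:\tau$. The notion of reduction $(\eta)$ is $\lambda x{:}\sigma.\Delta\,x\to\Delta$ if $x\notin FV(\Delta)$; $\to_\eta$ is its contextual closure, with no reduction performed inside the index $\Delta$ of a constant $u_\Delta$. *)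

(* Defs.v *)
From Stdlib Require Import Arith List Relations.
Import ListNotations.
Set Implicit Arguments.

Inductive itype (A : Type) : Type :=
| TAtom : A -> itype A
| TArr  : itype A -> itype A -> itype A
| TInt  : itype A -> itype A -> itype A.
Arguments TAtom {A} _.
Arguments TArr {A} _ _.
Arguments TInt {A} _ _.

(* A_inf = { a_i | i in nat } is modelled by nat;
   A^omega_inf = A_inf U {omega} is modelled by option nat, with None = omega. *)
Definition omegaB : itype (option nat) := TAtom None.

Inductive le_CDV : itype nat -> itype nat -> Prop :=
| CDV_refl  s : le_CDV s s
| CDV_incl1 s t : le_CDV (TInt s t) s
| CDV_incl2 s t : le_CDV (TInt s t) t
| CDV_glb r s t : le_CDV r s -> le_CDV r t -> le_CDV r (TInt s t)
| CDV_trans s t r : le_CDV s t -> le_CDV t r -> le_CDV s r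
| CDV_arrint s t r : le_CDV (TInt (TArr s t) (TArr s r)) (TArr s (TInt t r))
| CDV_arr s1 s2 t1 t2 : le_CDV s2 s1 -> le_CDV t1 t2 -> le_CDV (TArr s1 t1) (TArr s2 t2).

Inductive le_BCD : itype (option nat) -> itype (option nat) -> Prop :=
| BCD_refl  s : le_BCD s s
| BCD_incl1 s t : le_BCD (TInt s t) s
| BCD_incl2 s t : le_BCD (TInt s t) t
| BCD_glb r s t : le_BCD r s -> le_BCD r t -> le_BCD r (TInt s t)
| BCD_trans s t r : le_BCD s t -> le_BCD t r -> le_BCD s r
| BCD_arrint s t r : le_BCD (TInt (TArr s t) (TArr s r)) (TArr s (TInt t r))
| BCD_arr s1 s2 t1 t2 : le_BCD s2 s1 -> le_BCD t1 t2 -> le_BCD (TArr s1 t1) (TArr s2 t2)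
| BCD_omtop s : le_BCD s omegaB
| BCD_omarr s : le_BCD omegaB (TArr s omegaB).

Inductive lterm : Type :=
| LVar : nat -> lterm
| LLam : lterm -> lterm
| LApp : lterm -> lterm -> lterm.

Fixpoint llift (k c : nat) (t : lterm) : lterm :=
  match t with
  | LVar n => if c <=? n then LVar (n + k) else LVar n
  | LLam t => LLam (llift k (S c) t)
  | LApp t u => LApp (llift k c t) (llift k c u)
  end.

(* substitute N for index j, decrementing indices above j *)
Fixpoint lsubst (j : nat) (N : lterm) (t : lterm) : lterm :=
  match t with
  | LVar n => if n <? j then LVar n
              else if n =? j then llift j 0 N else LVar (n - 1)
  | LLam t => LLam (lsubst (S j) N t)
  | LApp t u => LApp (lsubst j N t) (lsubst j N u)
  end.

Inductive lbe_step : lterm -> lterm -> Prop :=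
| lbeta M N : lbe_step (LApp (LLam M) N) (lsubst 0 N M)
| leta M : lbe_step (LLam (LApp (llift 1 0 M) (LVar 0))) M
| llam_c M M' : lbe_step M M' -> lbe_step (LLam M) (LLam M')
| lappl_c M M' N : lbe_step M M' -> lbe_step (LApp M N) (LApp M' N)
| lappr_c M N N' : lbe_step N N' -> lbe_step (LApp M N) (LApp M N').

Definition beta_eta_eq : lterm -> lterm -> Prop := clos_refl_sym_trans lterm lbe_step.

Inductive dterm (A : Type) : Type :=
| DConst : dterm A -> dterm A                 (* u_Delta *)
| DVar   : nat -> dterm A
| DLam   : itype A -> dterm A -> dterm A
| DApp   : dterm A -> dterm A -> dterm A
| DPair  : dterm A -> dterm A -> dterm A
| DPr1   : dterm A -> dterm A
| DPr2   : dterm A -> dterm A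
| DCoe   : dterm A -> itype A -> dterm A.
Arguments DConst {A} _.
Arguments DVar {A} _.
Arguments DLam {A} _ _.
Arguments DApp {A} _ _.
Arguments DPair {A} _ _.
Arguments DPr1 {A} _.
Arguments DPr2 {A} _.
Arguments DCoe {A} _ _.

Fixpoint essence {A} (d : dterm A) : lterm :=
  match d with
  | DConst d => essence d
  | DVar x => LVar x
  | DLam _ d => LLam (essence d)
  | DApp d1 d2 => LApp (essence d1) (essence d2)
  | DPair d1 _ => essence d1
  | DPr1 d => essence d
  | DPr2 d => essence d
  | DCoe d _ => essence d
  end.

(* shifting of Delta-terms; the free variables of u_Delta are those of Delta *)
Fixpoint dlift {A} (k c : nat) (d : dterm A) : dterm A :=
  match d with
  | DConst d => DConst (dlift k c d)
  | DVar n => if c <=? n then DVar (n + k) else DVar n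
  | DLam s d => DLam s (dlift k (S c) d)
  | DApp d1 d2 => DApp (dlift k c d1) (dlift k c d2)
  | DPair d1 d2 => DPair (dlift k c d1) (dlift k c d2)
  | DPr1 d => DPr1 (dlift k c d)
  | DPr2 d => DPr2 (dlift k c d)
  | DCoe d s => DCoe (dlift k c d) s
  end.

(* ---------- The typed system Delta^T_{=beta eta} ----------
   A basis is a finite partial assignment of types to de Bruijn indices:
   index x is declared with type s iff nth_error B x = Some (Some s).
   [om] is [Some w] when the atom w = omega belongs to the atom set,
   [None] when omega is not an atom. *)
Definition basis (A : Type) := list (option (itype A)).

Inductive typing {A : Type} (om : option A) (le : itype A -> itype A -> Prop)
  : basis A -> dterm A -> itype A -> Prop :=
| ty_top B d w : om = Some w -> typing om le B (DConst d) (TAtom w)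
| ty_ax B x s : nth_error B x = Some (Some s) -> typing om le B (DVar x) s
| ty_arrI B s d t : typing om le (Some s :: B) d t -> typing om le B (DLam s d) (TArr s t)
| ty_arrE B d1 d2 s t : typing om le B d1 (TArr s t) -> typing om le B d2 s ->
    typing om le B (DApp d1 d2) t
| ty_intI B d1 d2 s t : typing om le B d1 s -> typing om le B d2 t ->
    beta_eta_eq (essence d1) (essence d2) ->
    typing om le B (DPair d1 d2) (TInt s t)
| ty_intE1 B d s t : typing om le B d (TInt s t) -> typing om le B (DPr1 d) s
| ty_intE2 B d s t : typing om le B d (TInt s t) -> typing om le B (DPr2 d) t
| ty_le B d s t : typing om le B d s -> le s t -> typing om le B (DCoe d t) t.

(* ---------- eta-reduction on Delta-terms ----------
   (eta)  lambda x:s. Delta x -> Delta  if x not in FV(Delta);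
   in de Bruijn form: DLam s (DApp (dlift 1 0 D) (DVar 0)) -> D.
   Contextual closure, but no reduction inside the index of u_Delta. *)
Inductive eta_step {A : Type} : dterm A -> dterm A -> Prop :=
| eta_root s d : eta_step (DLam s (DApp (dlift 1 0 d) (DVar 0))) d
| eta_lam s d d' : eta_step d d' -> eta_step (DLam s d) (DLam s d')
| eta_appl d1 d1' d2 : eta_step d1 d1' -> eta_step (DApp d1 d2) (DApp d1' d2)
| eta_appr d1 d2 d2' : eta_step d2 d2' -> eta_step (DApp d1 d2) (DApp d1 d2')
| eta_pairl d1 d1' d2 : eta_step d1 d1' -> eta_step (DPair d1 d2) (DPair d1' d2)
| eta_pairr d1 d2 d2' : eta_step d2 d2' -> eta_step (DPair d1 d2) (DPair d1 d2')
| eta_pr1 d d' : eta_step d d' -> eta_step (DPr1 d) (DPr1 d')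
| eta_pr2 d d' : eta_step d d' -> eta_step (DPr2 d) (DPr2 d')
| eta_coe d d' s : eta_step d d' -> eta_step (DCoe d s) (DCoe d' s).

Definition typing_CDV := @typing nat None le_CDV.
Definition typing_BCD := @typing (option nat) (Some None) le_BCD.

(* Main.v *)
Require Import Defs.
From Stdlib Require Import Arith List Relations Lia.
Set Implicit Arguments.

Fixpoint ren (f : nat -> nat) (t : lterm) : lterm :=
  match t with
  | LVar n => LVar (f n)
  | LLam t => LLam (ren (fun n => match n with 0 => 0 | S m => S (f m) end) t)
  | LApp t u => LApp (ren f t) (ren f u)
  end.

Definition up (f : nat -> nat) n := match n with 0 => 0 | S m => S (f m) end.

Lemma ren_ext : forall t f g, (forall n, f n = g n) -> ren f t = ren g t.
Proof.
  induction t; intros f g H; simpl; f_equal; auto.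
  apply IHt. intros [|n]; auto.
Qed.

Definition liftf k c n := if c <=? n then n + k else n.

Lemma llift_ren : forall t k c, llift k c t = ren (liftf k c) t.
Proof.
  induction t; intros k c; simpl.
  - unfold liftf. destruct (c <=? n); auto.
  - f_equal. rewrite IHt. apply ren_ext. intros [|n]; unfold liftf; simpl; auto.
    destruct (c <=? n); auto.
  - f_equal; auto.
Qed.

Lemma ren_comp : forall t f g, ren f (ren g t) = ren (fun n => f (g n)) t.
Proof.
  induction t; intros f g; simpl; f_equal; auto.
  rewrite IHt. apply ren_ext. intros [|n]; auto.
Qed.

Lemma ren_id : forall t f, (forall n, f n = n) -> ren f t = t.
Proof.
  induction t; intros f H; simpl; f_equal; auto.
  apply IHt. intros [|n]; auto.
Qed.

Fixpoint upn j f := match j with 0 => f | S j => up (upn j f) end.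

Lemma upn_spec : forall j f n, upn j f n = if n <? j then n else f (n - j) + j.
Proof.
  induction j; intros f n; simpl.
  - rewrite Nat.sub_0_r, Nat.add_0_r; auto.
  - destruct n as [|n]; simpl; auto. rewrite IHj.
    change (S n <? S j) with (n <? j). replace (S n - S j) with (n - j) by lia.
    destruct (n <? j) eqn:E; auto.
Qed.

Lemma ren_lsubst : forall M j f N,
  ren (upn j f) (lsubst j N M) = lsubst j (ren f N) (ren (upn (S j) f) M).
Proof.
  induction M; intros j f N.
  - cbn [ren lsubst]. rewrite (upn_spec (S j)).
    destruct (lt_eq_lt_dec n j) as [[H|H]|H].
    + assert (E1: n <? j = true) by (apply Nat.ltb_lt; lia).
      assert (E2: n <? S j = true) by (apply Nat.ltb_lt; lia).
      rewrite E1, E2. cbn [ren lsubst]. rewrite E1, upn_spec, E1. auto.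
    + subst. assert (E1: j <? j = false) by (apply Nat.ltb_ge; lia).
      assert (E2: j <? S j = true) by (apply Nat.ltb_lt; lia).
      rewrite E1, E2. cbn [ren lsubst]. rewrite E1, !Nat.eqb_refl.
      rewrite !llift_ren, !ren_comp. apply ren_ext. intros m.
      rewrite upn_spec. unfold liftf. simpl.
      destruct (m + j <? j) eqn:E3. apply Nat.ltb_lt in E3; lia.
      replace (m + j - j) with m by lia. lia.
    + assert (E1: n <? j = false) by (apply Nat.ltb_ge; lia).
      assert (E2: n <? S j = false) by (apply Nat.ltb_ge; lia).
      assert (E3: n =? j = false) by (apply Nat.eqb_neq; lia).
      rewrite E1, E3, E2. cbn [ren lsubst].
      assert (E4: f (n - S j) + S j <? j = false) by (apply Nat.ltb_ge; lia).
      assert (E5: f (n - S j) + S j =? j = false) by (apply Nat.eqb_neq; lia).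
      rewrite E4, E5, upn_spec.
      assert (E6: n - 1 <? j = false) by (apply Nat.ltb_ge; lia).
      rewrite E6. f_equal. replace (n - 1 - j) with (n - S j) by lia. lia.
  - simpl. f_equal. specialize (IHM (S j) f N). simpl in IHM.
    transitivity (ren (up (upn j f)) (lsubst (S j) N M)).
    apply ren_ext. intros [|n]; auto.
    rewrite IHM. reflexivity.
  - simpl. f_equal; auto.
Qed.

Lemma ren_step : forall M M', lbe_step M M' -> forall f, lbe_step (ren f M) (ren f M').
Proof.
  induction 1; intros f; simpl.
  - pose proof (ren_lsubst M 0 f N) as H. simpl in H. rewrite H.
    replace (ren (fun n => match n with 0 => 0 | S m => S (f m) end) M)
      with (ren (up f) M) by (apply ren_ext; intros [|n]; auto).
    apply lbeta.
  - replace (ren (fun n => match n with 0 => 0 | S m => S (f m) end) (llift 1 0 M))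
      with (llift 1 0 (ren f M)).
    apply leta.
    rewrite !llift_ren, !ren_comp. apply ren_ext. intros n. unfold liftf. simpl.
    replace (n + 1) with (S n) by lia. lia.
  - apply llam_c; auto.
  - apply lappl_c; auto.
  - apply lappr_c; auto.
Qed.

Lemma ren_bee : forall M N, beta_eta_eq M N -> forall f, beta_eta_eq (ren f M) (ren f N).
Proof.
  induction 1; intros f.
  - apply rst_step. apply ren_step; auto.
  - apply rst_refl.
  - apply rst_sym; apply IHclos_refl_sym_trans.
  - eapply rst_trans; [apply IHclos_refl_sym_trans1 | apply IHclos_refl_sym_trans2].
Qed.

Definition lowerf c n := if n <=? c then n else n - 1.

Lemma lower_lift : forall M c, ren (lowerf c) (llift 1 c M) = M.
Proof.
  intros M c. rewrite llift_ren, ren_comp. apply ren_id. intros n.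
  unfold lowerf, liftf. destruct (c <=? n) eqn:E.
  - apply Nat.leb_le in E. destruct (n + 1 <=? c) eqn:E2. apply Nat.leb_le in E2; lia. lia.
  - apply Nat.leb_gt in E. destruct (n <=? c) eqn:E2; auto. apply Nat.leb_gt in E2; lia.
Qed.

Lemma bee_unlift : forall M N c,
  beta_eta_eq (llift 1 c M) (llift 1 c N) -> beta_eta_eq M N.
Proof.
  intros M N c H. rewrite <- (lower_lift M c), <- (lower_lift N c). apply ren_bee; auto.
Qed.

Lemma essence_dlift : forall A (d : dterm A) k c, essence (dlift k c d) = llift k c (essence d).
Proof.
  induction d; intros k c; simpl; auto.
  destruct (c <=? n); auto.
  rewrite IHd; auto.
  rewrite IHd1, IHd2; auto.
Qed.

Lemma strengthen : forall A om le (B' : basis A) e t, typing om le B' e t ->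
  forall d c B, e = dlift 1 c d -> (forall n, nth_error B n = nth_error B' (liftf 1 c n)) ->
  typing om le B d t.
Proof.
  intros A om le B' e t H. induction H; intros d0 c B0 He HB;
    destruct d0; simpl in He; try discriminate;
    try (destruct (c <=? n); discriminate).
  - apply ty_top; auto.
  - apply ty_ax. rewrite HB. unfold liftf.
    destruct (c <=? n); injection He; intros; subst; auto.
  - injection He; intros; subst. apply ty_arrI. eapply IHtyping; eauto.
    intros [|n]; simpl; auto. rewrite HB. unfold liftf. simpl. destruct (c <=? n); auto.
  - injection He; intros; subst. eapply ty_arrE; eauto.
  - injection He; intros; subst. apply ty_intI; eauto.
    rewrite !essence_dlift in H1. eapply bee_unlift; eauto.
  - injection He; intros; subst. eapply ty_intE1; eauto.
  - injection He; intros; subst. eapply ty_intE2; eauto.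
  - injection He; intros; subst. eapply ty_le; eauto.
Qed.

Lemma eta_essence : forall A (d d' : dterm A), eta_step d d' ->
  essence d = essence d' \/ lbe_step (essence d) (essence d').
Proof.
  induction 1; simpl; auto.
  - right. rewrite essence_dlift. apply leta.
  - destruct IHeta_step; [left; f_equal; auto | right; apply llam_c; auto].
  - destruct IHeta_step; [left; f_equal; auto | right; apply lappl_c; auto].
  - destruct IHeta_step; [left; f_equal; auto | right; apply lappr_c; auto].
Qed.

Lemma eta_bee : forall A (d d' : dterm A), eta_step d d' -> beta_eta_eq (essence d) (essence d').
Proof.
  intros A d d' H. destruct (eta_essence H) as [E|S].
  rewrite E; apply rst_refl. apply rst_step; auto.
Qed.

Lemma sr : forall A om le (B : basis A) d1 t, typing om le B d1 t ->
  forall d2, eta_step d1 d2 -> typing om le B d2 t.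
Proof.
  induction 1; intros d' Hs; inversion Hs; subst.
  - inversion H; subst. match goal with Hv : typing _ _ _ (DVar 0) _ |- _ => inversion Hv; subst end.
    match goal with Hn : nth_error _ 0 = _ |- _ => simpl in Hn; injection Hn; intros; subst end.
    match goal with Hl : typing _ _ _ (dlift 1 0 d') _ |- _ => eapply (strengthen Hl d' 0 B); eauto end.
    intros n. unfold liftf. simpl. rewrite Nat.add_1_r. auto.
  - apply ty_arrI; auto.
  - eapply ty_arrE; eauto.
  - eapply ty_arrE; eauto.
  - apply ty_intI; auto. eapply rst_trans; [apply rst_sym; apply eta_bee; eauto | auto].
  - apply ty_intI; auto. eapply rst_trans; [eauto | apply eta_bee; eauto].
  - eapply ty_intE1; eauto.
  - eapply ty_intE2; eauto.
  - eapply ty_le; eauto.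
Qed.

Theorem mainTheorem11 :
  (forall (B : basis nat) (d1 d2 : dterm nat) (s : itype nat),
      typing_CDV B d1 s -> eta_step d1 d2 -> typing_CDV B d2 s) /\
  (forall (B : basis (option nat)) (d1 d2 : dterm (option nat)) (s : itype (option nat)),
      typing_BCD B d1 s -> eta_step d1 d2 -> typing_BCD B d2 s).
Proof.
  split; intros; eapply sr; eauto.
Qed.
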